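(* There is a pseudo-double functor $\mathbb{O}\mathbf{rg}\to\mathbb{E}\mathbf{ff}^{\mathrm{el}}$ which is the identity on objects and vertical morphisms and is fully faithful on the category of horizontal morphisms and squares, with essential image the linear elementary effects handlers (those whose carrier is of the form $S\mathcal{y}$ for a set $S$). On horizontal morphisms it is given, for each set $S$, by the natural bijection between $[q,p]$-coalgebra structures $S\to[q,p]\triangleleft S$ and polynomial maps $S\mathcal{y}\triangleleft q\to p\triangleleft S\mathcal{y}$.
   Context: Polynomials $p=\sum_{I\in p(1)}\mathcal{y}^{p[I]}$ form $\mathbf{Poly}$ (morphisms are natural transformations: $\phi_1\colon p(1)\to q(1)$ and $\phi^\#_I\colon q[\phi_1I]\to p[I]$), with composition $\triangleleft$ and Dirichlet tensor $\otimes$ ($(p\otimes q)(1)=p(1)\times q(1)$, $(p\otimes q)[I,J]=p[I]\times q[J]$, unit $\mathcal{y}$). A set $S$ is identified with the constant polynomial, and $S\mathcal{y}$ is the linear polynomial with positions $S$ and one direction each. The closure of $\otimes$ is $[q,p]\coloneqq\sum_{\phi\colon q\to p}\mathcal{y}^{\sum_{I\in q(1)}p[\phi_1I]}$, with $(-\otimes q)\dashv[q,-]$; a $[q,p]$-coalgebra is a set $S$ with a function $\vartheta\colon S\to[q,p]\triangleleft S$. The double category $\mathbb{O}\mathbf{rg}$ has objects polynomials, vertical morphisms polynomial maps, horizontal morphisms from $q$ to $p$ the $[q,p]$-coalgebras (composed by taking the product of state sets and using the canonical maps $([q,p]\triangleleft T)\otimes([r,q]\triangleleft S)\to([q,p]\otimes[r,q])\triangleleft(T\times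 S)\to[r,p]\triangleleft(T\times S)$), and squares from $(S,\vartheta)$ (from $q$ to $p$) to $(S',\vartheta')$ (from $q'$ to $p'$) over $\psi\colon q\to q'$, $\varphi\colon p\to p'$ the functions $f\colon S\to S'$ with $([q,p']\triangleleft f)\circ([q,\varphi]\triangleleft S)\circ\vartheta=([\psi,p']\triangleleft S')\circ\vartheta'\circ f$. Elementary effects handlers: for polynomials $p,q$, a $(p,q)$-effects handler is a polynomial $s$ with a morphism $\varphi\colon s\triangleleft q\to p\triangleleft s$; it is linear if $s=S\mathcal{y}$. $\mathbb{E}\mathbf{ff}^{\mathrm{el}}$ is the pseudo-double category with objects polynomials, vertical morphisms polynomial maps, horizontal morphisms from $q$ to $p$ the $(p,q)$-effects handlers, composite of $(s,\varphi)$ (a $(p,q)$-handler) and $(t,\psi)$ (a $(q,r)$-handler) given by $s\triangleleft t$ with structure map $(\varphi\triangleleft t)\circ(s\triangleleft\psi)$, and squares over $\psi\colon q\to q'$, $\varphi\colon p\to p'$ the maps $\gamma\colon s\to s'$ with $(\varphi\triangleleft\gamma)\circ\vartheta=\vartheta'\circ(\gamma\triangleleft\psi)$. *)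

(* Defs.v *)
Set Implicit Arguments.

Record poly : Type := Poly { pos : Type; dir : pos -> Type }.
Arguments Poly : clear implicits.

(** A morphism (natural transformation) p -> q: phi_1 on positions,
    phi^# backwards on directions. *)
Record pmap (p q : poly) : Type := PMap {
  on_pos : pos p -> pos q;
  on_dir : forall i : pos p, dir q (on_pos i) -> dir p i }.
Arguments PMap : clear implicits.
Arguments on_pos {p q} _ _.
Arguments on_dir {p q} _ _ _.

Definition pid (p : poly) : pmap p p :=
  PMap p p (fun i => i) (fun i d => d).

Definition pcomp {p q r : poly} (g : pmap q r) (f : pmap p q) : pmap p r :=
  PMap p r (fun i => on_pos g (on_pos f i))
           (fun i d => on_dir f i (on_dir g (on_pos f i) d)).

Definition pinvertible {p q : poly} (f : pmap p q) : Prop :=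
  exists g : pmap q p, pcomp g f = pid p /\ pcomp f g = pid q.

(** A set S as a constant polynomial, and the linear polynomial S y. *)
Definition pconst (S : Type) : poly := Poly S (fun _ => Empty_set).
Definition plin (S : Type) : poly := Poly S (fun _ => unit).
Definition py : poly := plin unit.

Definition pconst_map {S S' : Type} (f : S -> S') : pmap (pconst S) (pconst S') :=
  PMap (pconst S) (pconst S') f (fun _ e => match e with end).

(** * Composition product p <| q *)
Definition tri (p q : poly) : poly :=
  Poly {i : pos p & dir p i -> pos q}
       (fun x => {d : dir p (projT1 x) & dir q (projT2 x d)}).

Definition tri_map {p p' q q' : poly} (f : pmap p p') (g : pmap q q')
  : pmap (tri p q) (tri p' q') :=
  PMap (tri p q) (tri p' q')
    (fun x => existT (fun i => dir p' i -> pos q') (on_pos f (projT1 x))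
                (fun d' => on_pos g (projT2 x (on_dir f (projT1 x) d'))))
    (fun x e => existT (fun d => dir q (projT2 x d))
                  (on_dir f (projT1 x) (projT1 e)) (on_dir g _ (projT2 e))).

(** canonical associator and unitors of <| (the paper treats <| as strictly
    associative and unital; in type theory these are the canonical isos) *)
Definition assoc (a b c : poly) : pmap (tri (tri a b) c) (tri a (tri b c)) :=
  PMap (tri (tri a b) c) (tri a (tri b c))
   (fun x => existT (fun i => dir a i -> pos (tri b c)) (projT1 (projT1 x))
      (fun d => existT (fun j => dir b j -> pos c) (projT2 (projT1 x) d)
                  (fun e => projT2 x (existT _ d e))))
   (fun x w => existT (fun de => dir c (projT2 x de))
                 (existT _ (projT1 w) (projT1 (projT2 w))) (projT2 (projT2 w))).

Definition assoc_inv (a b c : poly) : pmap (tri a (tri b c)) (tri (tri a b) c) :=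
  PMap (tri a (tri b c)) (tri (tri a b) c)
   (fun y => existT (fun x : pos (tri a b) => dir (tri a b) x -> pos c)
       (existT (fun i => dir a i -> pos b) (projT1 y) (fun d => projT1 (projT2 y d)))
       (fun de => projT2 (projT2 y (projT1 de)) (projT2 de)))
   (fun y w => existT _ (projT1 (projT1 w))
                 (existT _ (projT2 (projT1 w)) (projT2 w))).

Definition lunit (p : poly) : pmap (tri py p) p :=
  PMap (tri py p) p (fun x => projT2 x tt) (fun x d => existT _ tt d).
Definition lunit_inv (p : poly) : pmap p (tri py p) :=
  PMap p (tri py p) (fun i => existT (fun _ : unit => unit -> pos p) tt (fun _ => i))
    (fun i w => projT2 w).
Definition runit (p : poly) : pmap (tri p py) p :=
  PMap (tri p py) p (fun x => projT1 x) (fun x d => existT _ d tt).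
Definition runit_inv (p : poly) : pmap p (tri p py) :=
  PMap p (tri p py) (fun i => existT (fun j => dir p j -> unit) i (fun _ => tt))
    (fun i w => projT1 w).

(** * Internal hom [q,p] = sum_{phi : q -> p} y^{sum_I p[phi_1 I]} *)
Definition hom (q p : poly) : poly :=
  Poly (pmap q p) (fun phi => {I : pos q & dir p (on_pos phi I)}).

Definition hom_r {q p p' : poly} (phi : pmap p p') : pmap (hom q p) (hom q p') :=
  PMap (hom q p) (hom q p') (fun chi => pcomp phi chi)
    (fun chi e => existT _ (projT1 e) (on_dir phi _ (projT2 e))).

Definition hom_l {q q' p : poly} (psi : pmap q q') : pmap (hom q' p) (hom q p) :=
  PMap (hom q' p) (hom q p) (fun chi => pcomp chi psi)
    (fun chi e => existT _ (on_pos psi (projT1 e)) (projT2 e)).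

(** horizontal morphism from q to p: a [q,p]-coalgebra *)
Record coalg (q p : poly) : Type := Coalg {
  st : Type;
  coal : st -> pos (tri (hom q p) (pconst st)) }.
Arguments Coalg {q p} st coal.
Arguments st {q p} _.
Arguments coal {q p} _ _.

Definition org_square {q p q' p' : poly} (psi : pmap q q') (phi : pmap p p')
    (c : coalg q p) (c' : coalg q' p') (f : st c -> st c') : Prop :=
  (fun s => on_pos (tri_map (pid (hom q p')) (pconst_map f))
             (on_pos (tri_map (hom_r phi) (pid (pconst (st c)))) (coal c s)))
  = (fun s => on_pos (tri_map (hom_l psi) (pid (pconst (st c')))) (coal c' (f s))).

(** horizontal composite: (T,psi) from q to p after (S,theta) from r to q,
    via ([q,p]<|T) (x) ([r,q]<|S) -> ([q,p](x)[r,q])<|(TxS) -> [r,p]<|(TxS) *)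
Definition org_hcomp {r q p : poly} (c1 : coalg q p) (c2 : coalg r q) : coalg r p :=
  Coalg (st c1 * st c2)%type (fun ts =>
    existT (fun chi : pmap r p => {I : pos r & dir p (on_pos chi I)} -> (st c1 * st c2)%type)
      (pcomp (projT1 (coal c1 (fst ts))) (projT1 (coal c2 (snd ts))))
      (fun e =>
         (projT2 (coal c1 (fst ts))
            (existT _ (on_pos (projT1 (coal c2 (snd ts))) (projT1 e)) (projT2 e)),
          projT2 (coal c2 (snd ts))
            (existT _ (projT1 e)
               (on_dir (projT1 (coal c1 (fst ts))) _ (projT2 e)))))).

Definition org_unit (q : poly) : coalg q q :=
  Coalg unit (fun _ => existT (fun chi : pmap q q => {I : pos q & dir q (on_pos chi I)} -> unit)
                         (pid q) (fun _ => tt)).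

Definition org_assoc {A B C : Type} (x : (A * B) * C) : A * (B * C) :=
  (fst (fst x), (snd (fst x), snd x)).

(** horizontal morphism from q to p: a (p,q)-effects handler *)
Record handler (p q : poly) : Type := Handler {
  car : poly;
  hstr : pmap (tri car q) (tri p car) }.
Arguments Handler {p q} car hstr.
Arguments car {p q} _.
Arguments hstr {p q} _.

Definition is_linear {p q : poly} (h : handler p q) : Prop :=
  exists (S : Type) (b : pmap (car h) (plin S)), pinvertible b.

Definition eff_square {q p q' p' : poly} (psi : pmap q q') (phi : pmap p p')
    (h : handler p q) (h' : handler p' q') (g : pmap (car h) (car h')) : Prop :=
  pcomp (tri_map phi g) (hstr h) = pcomp (hstr h') (tri_map g psi).

(** composite of (s,phi) a (p,q)-handler and (t,psi) a (q,r)-handler: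
    s<|t with structure (phi<|t) o (s<|psi) (modulo associators) *)
Definition eff_hcomp {p q r : poly} (h1 : handler p q) (h2 : handler q r)
  : handler p r :=
  Handler (tri (car h1) (car h2))
    (pcomp (assoc p (car h1) (car h2))
     (pcomp (tri_map (hstr h1) (pid (car h2)))
      (pcomp (assoc_inv (car h1) q (car h2))
       (pcomp (tri_map (pid (car h1)) (hstr h2))
              (assoc (car h1) (car h2) r))))).

(** horizontal unit: y with y <| q = q = q <| y *)
Definition eff_unit (q : poly) : handler q q :=
  Handler py (pcomp (runit_inv q) (lunit q)).

Definition transpose {q p : poly} {S : Type}
    (th : S -> pos (tri (hom q p) (pconst S)))
  : pmap (tri (plin S) q) (tri p (plin S)) :=
  PMap (tri (plin S) q) (tri p (plin S))
   (fun x => existT (fun i => dir p i -> S)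
       (on_pos (projT1 (th (projT1 x))) (projT2 x tt))
       (fun d => projT2 (th (projT1 x)) (existT _ (projT2 x tt) d)))
   (fun x w => existT (fun u => dir q (projT2 x u)) tt
       (on_dir (projT1 (th (projT1 x))) (projT2 x tt) (projT1 w))).

Definition Fh {q p : poly} (c : coalg q p) : handler p q :=
  Handler (plin (st c)) (transpose (coal c)).

(** * Pseudo-double functor structure extending Fh (identity on objects and
    vertical morphisms): action on squares and comparison cells. *)
Record pdf_data : Type := PDF {
  Fsq : forall (q p q' p' : poly) (psi : pmap q q') (phi : pmap p p')
          (c : coalg q p) (c' : coalg q' p') (f : st c -> st c'),
          pmap (car (Fh c)) (car (Fh c'));
  Fmu : forall (r q p : poly) (c1 : coalg q p) (c2 : coalg r q),
          pmap (car (eff_hcomp (Fh c1) (Fh c2))) (car (Fh (org_hcomp c1 c2)));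
  Feta : forall q : poly, pmap (car (eff_unit q)) (car (Fh (org_unit q))) }.
Arguments Fsq _ {q p q' p'} psi phi c c' f.
Arguments Fmu _ {r q p} c1 c2.
Arguments Feta _ q.

Definition is_pseudo_double_functor (F : pdf_data) : Prop :=
  (forall q p q' p' (psi : pmap q q') (phi : pmap p p') c c' f,
     org_square psi phi c c' f -> eff_square psi phi (Fh c) (Fh c') (Fsq F psi phi c c' f))
  /\ (forall q p q' p' q'' p'' (psi : pmap q q') (phi : pmap p p')
        (psi' : pmap q' q'') (phi' : pmap p' p'') c c' c'' f g,
        org_square psi phi c c' f -> org_square psi' phi' c' c'' g ->
        Fsq F (pcomp psi' psi) (pcomp phi' phi) c c'' (fun s => g (f s))
        = pcomp (Fsq F psi' phi' c' c'' g) (Fsq F psi phi c c' f))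
  /\ (forall q p (c : coalg q p),
        Fsq F (pid q) (pid p) c c (fun s => s) = pid (car (Fh c)))
  /\ (forall r q p (c1 : coalg q p) (c2 : coalg r q),
        eff_square (pid r) (pid p) (eff_hcomp (Fh c1) (Fh c2)) (Fh (org_hcomp c1 c2))
                   (Fmu F c1 c2)
        /\ pinvertible (Fmu F c1 c2))
  /\ (forall q, eff_square (pid q) (pid q) (eff_unit q) (Fh (org_unit q)) (Feta F q)
                /\ pinvertible (Feta F q))
  /\ (forall r q p r' q' p' (chi : pmap r r') (psi : pmap q q') (phi : pmap p p')
        (c1 : coalg q p) (c1' : coalg q' p') (c2 : coalg r q) (c2' : coalg r' q')
        f1 f2,
        org_square psi phi c1 c1' f1 -> org_square chi psi c2 c2' f2 ->
        pcomp (Fmu F c1' c2') (tri_map (Fsq F psi phi c1 c1' f1) (Fsq F chi psi c2 c2' f2))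
        = pcomp (Fsq F chi phi (org_hcomp c1 c2) (org_hcomp c1' c2')
                   (fun ts => (f1 (fst ts), f2 (snd ts))))
                (Fmu F c1 c2))
  /\ (forall q q' (psi : pmap q q'),
        pcomp (Feta F q') (pid py)
        = pcomp (Fsq F psi psi (org_unit q) (org_unit q') (fun u => u)) (Feta F q))
  /\ (forall s r q p (c1 : coalg q p) (c2 : coalg r q) (c3 : coalg s r),
        pcomp (Fsq F (pid s) (pid p) (org_hcomp (org_hcomp c1 c2) c3)
                   (org_hcomp c1 (org_hcomp c2 c3)) org_assoc)
              (pcomp (Fmu F (org_hcomp c1 c2) c3)
                     (tri_map (Fmu F c1 c2) (pid (car (Fh c3)))))
        = pcomp (Fmu F c1 (org_hcomp c2 c3))
                (pcomp (tri_map (pid (car (Fh c1))) (Fmu F c2 c3))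
                       (assoc (car (Fh c1)) (car (Fh c2)) (car (Fh c3)))))
  /\ (forall q p (c : coalg q p),
        pcomp (Fsq F (pid q) (pid p) (org_hcomp (org_unit p) c) c (fun x => snd x))
              (pcomp (Fmu F (org_unit p) c) (tri_map (Feta F p) (pid (car (Fh c)))))
        = lunit (car (Fh c)))
  /\ (forall q p (c : coalg q p),
        pcomp (Fsq F (pid q) (pid p) (org_hcomp c (org_unit q)) c (fun x => fst x))
              (pcomp (Fmu F c (org_unit q)) (tri_map (pid (car (Fh c))) (Feta F q)))
        = runit (car (Fh c))).

Definition fully_faithful_on_squares (F : pdf_data) : Prop :=
  forall q p q' p' (psi : pmap q q') (phi : pmap p p') (c : coalg q p) (c' : coalg q' p'),
    (forall f g, org_square psi phi c c' f -> org_square psi phi c c' g ->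
       Fsq F psi phi c c' f = Fsq F psi phi c c' g -> f = g)
    /\ (forall gm, eff_square psi phi (Fh c) (Fh c') gm ->
          exists f, org_square psi phi c c' f /\ Fsq F psi phi c c' f = gm).

Definition in_essential_image {p q : poly} (h : handler p q) : Prop :=
  exists (q0 p0 : poly) (c : coalg q0 p0) (psi : pmap q0 q) (phi : pmap p0 p)
         (a : pmap (car (Fh c)) (car h)),
    eff_square psi phi (Fh c) h a /\ pinvertible psi /\ pinvertible phi /\ pinvertible a.

(* Main.v *)
Require Import Defs.
From Stdlib Require Import FunctionalExtensionality Setoid.

Lemma pmap_ext {p q : poly} (f g : pmap p q) :
  (forall i, existT (fun j => dir q j -> dir p i) (on_pos f i) (on_dir f i)
           = existT (fun j => dir q j -> dir p i) (on_pos g i) (on_dir g i)) -> f = g.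
Proof.
  intro H.
  assert (E : (fun i => existT (fun j => dir q j -> dir p i) (on_pos f i) (on_dir f i))
            = (fun i => existT (fun j => dir q j -> dir p i) (on_pos g i) (on_dir g i)))
    by (apply functional_extensionality_dep; exact H).
  apply (f_equal (fun F : forall i, {j : pos q & dir q j -> dir p i} =>
            PMap p q (fun i => projT1 (F i)) (fun i => projT2 (F i)))) in E.
  destruct f, g; exact E.
Qed.

Lemma unit_fun_eq {A : Type} (f g : A -> unit) : f = g.
Proof. apply functional_extensionality; intro x; destruct (f x), (g x); reflexivity. Qed.

Definition untranspose {q p : poly} {S : Type}
  (g : pmap (tri (plin S) q) (tri p (plin S))) : S -> pos (tri (hom q p) (pconst S)) :=
  fun s =>
  existT (fun chi : pmap q p => {I : pos q & dir p (on_pos chi I)} -> S)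
   (PMap q p (fun I => projT1 (on_pos g (existT (fun _ : S => unit -> pos q) s (fun _ => I))))
      (fun I d => projT2 (on_dir g (existT (fun _ : S => unit -> pos q) s (fun _ => I))
                    (existT _ d tt))))
   (fun e => projT2 (on_pos g (existT (fun _ : S => unit -> pos q) s (fun _ => projT1 e))) (projT2 e)).

Lemma untranspose_transpose {q p : poly} {S : Type} (th : S -> pos (tri (hom q p) (pconst S))) :
  untranspose (transpose th) = th.
Proof.
  apply functional_extensionality; intro s. unfold untranspose; simpl.
  destruct (th s) as [[c1 c2] K]; simpl.
  f_equal. apply functional_extensionality; intros [I d]; reflexivity.
Qed.

Lemma transpose_untranspose {q p : poly} {S : Type} (g : pmap (tri (plin S) q) (tri p (plin S))) :
  transpose (untranspose g) = g.
Proof.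
  apply pmap_ext; intros [s k].
  assert (Hk : k = fun _ => k tt) by (apply functional_extensionality; intros []; reflexivity).
  rewrite Hk. generalize (k tt) as I. intro I. simpl.
  generalize (on_dir g (existT (fun _ : S => unit -> pos q) s (fun _ => I))).
  destruct (on_pos g (existT (fun _ : S => unit -> pos q) s (fun _ => I))) as [j h]; simpl.
  intro o. f_equal. apply functional_extensionality; intros [d []].
  cbn. destruct (o (existT _ d tt)) as [[] e]; reflexivity.
Qed.

Definition Fsq0 {q p q' p' : poly} (psi : pmap q q') (phi : pmap p p')
   (c : coalg q p) (c' : coalg q' p') (f : st c -> st c') : pmap (plin (st c)) (plin (st c')) :=
  PMap (plin (st c)) (plin (st c')) f (fun _ _ => tt).

Definition Fmu0 {r q p : poly} (c1 : coalg q p) (c2 : coalg r q) :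
  pmap (tri (plin (st c1)) (plin (st c2))) (plin (st c1 * st c2)) :=
  PMap (tri (plin (st c1)) (plin (st c2))) (plin (st c1 * st c2))
    (fun x => (projT1 x, projT2 x tt)) (fun x _ => existT _ tt tt).

Definition F0 : pdf_data := PDF (@Fsq0) (@Fmu0) (fun q => pid py).

Lemma uu (x y : {_ : unit & unit}) : x = y.
Proof. destruct x as [[] []], y as [[] []]; reflexivity. Qed.

Lemma ufun {A : Type} (f g : A -> {_ : unit & unit}) : f = g.
Proof. apply functional_extensionality; intro; apply uu. Qed.

Lemma L1 : forall q p q' p' (psi : pmap q q') (phi : pmap p p') c c' f,
     org_square psi phi c c' f -> eff_square psi phi (Fh c) (Fh c') (Fsq F0 psi phi c c' f).
Proof.
  intros q p q' p' psi phi c c' f H. unfold eff_square.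
  apply pmap_ext; intros [s k].
  pose proof (f_equal (fun F => F s) H) as Hs. cbv beta in Hs.
  set (ev := fun (z : pos (tri (hom q p') (pconst (st c')))) (I : pos q) =>
     existT (fun j : pos p' => ((dir p' j -> dir q I) * (dir p' j -> st c'))%type)
       (on_pos (projT1 z) I) (on_dir (projT1 z) I, fun d => projT2 z (existT _ I d))).
  pose proof (f_equal (fun z => ev z (k tt)) Hs) as Hs2.
  set (G := fun (z : {j : pos p' & ((dir p' j -> dir q (k tt)) * (dir p' j -> st c'))%type}) =>
     existT (fun y : pos (tri p' (plin (st c'))) => dir (tri p' (plin (st c'))) y -> dir (tri (plin (st c)) q) (existT _ s k))
        (existT (fun j => dir p' j -> st c') (projT1 z) (snd (projT2 z)))
        (fun w => existT (fun u => dir q (k u)) tt (fst (projT2 z) (projT1 w)))).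
  exact (f_equal G Hs2).
Qed.

Lemma L2 : forall q p q' p' q'' p'' (psi : pmap q q') (phi : pmap p p')
        (psi' : pmap q' q'') (phi' : pmap p' p'') c c' c'' f g,
        org_square psi phi c c' f -> org_square psi' phi' c' c'' g ->
        Fsq F0 (pcomp psi' psi) (pcomp phi' phi) c c'' (fun s => g (f s))
        = pcomp (Fsq F0 psi' phi' c' c'' g) (Fsq F0 psi phi c c' f).
Proof. intros; reflexivity. Qed.

Lemma L3 : forall q p (c : coalg q p),
        Fsq F0 (pid q) (pid p) c c (fun s => s) = pid (car (Fh c)).
Proof.
  intros. apply pmap_ext; intro i; simpl. f_equal.
  apply functional_extensionality; intros []; reflexivity.
Qed.

Lemma L4 : forall r q p (c1 : coalg q p) (c2 : coalg r q),
        eff_square (pid r) (pid p) (eff_hcomp (Fh c1) (Fh c2)) (Fh (org_hcomp c1 c2))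
                   (Fmu F0 c1 c2)
        /\ pinvertible (Fmu F0 c1 c2).
Proof.
  intros. split.
  - unfold eff_square. apply pmap_ext; intros [[s1 k1] k2]. simpl.
    reflexivity.
  - exists (PMap (plin (st c1 * st c2)) (tri (plin (st c1)) (plin (st c2)))
             (fun ts => existT (fun _ => unit -> st c2) (fst ts) (fun _ => snd ts))
             (fun _ _ => tt)).
    split.
    + apply pmap_ext; intros [s1 k1]; simpl.
      assert (Hk : k1 = fun _ => k1 tt) by (apply functional_extensionality; intros []; reflexivity).
      replace (existT (fun _ : st c1 => unit -> st c2) s1 k1) with (existT (fun _ : st c1 => unit -> st c2) s1 (fun _ => k1 tt)) by (f_equal; exact (eq_sym Hk)).
      f_equal. apply ufun.
    + apply pmap_ext; intros [s1 s2]; simpl. f_equal.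
      apply functional_extensionality; intros []; reflexivity.
Qed.

Lemma L5 : forall q, eff_square (pid q) (pid q) (eff_unit q) (Fh (org_unit q)) (Feta F0 q)
                /\ pinvertible (Feta F0 q).
Proof.
  intro q. split.
  - unfold eff_square. apply pmap_ext; intros [[] k]; simpl.
    reflexivity.
  - exists (pid py); split; reflexivity.
Qed.

Lemma L6 : forall r q p r' q' p' (chi : pmap r r') (psi : pmap q q') (phi : pmap p p')
        (c1 : coalg q p) (c1' : coalg q' p') (c2 : coalg r q) (c2' : coalg r' q')
        f1 f2,
        org_square psi phi c1 c1' f1 -> org_square chi psi c2 c2' f2 ->
        pcomp (Fmu F0 c1' c2') (tri_map (Fsq F0 psi phi c1 c1' f1) (Fsq F0 chi psi c2 c2' f2))
        = pcomp (Fsq F0 chi phi (org_hcomp c1 c2) (org_hcomp c1' c2')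
                   (fun ts => (f1 (fst ts), f2 (snd ts))))
                (Fmu F0 c1 c2).
Proof.
  intros. apply pmap_ext; intros [s k]; simpl. f_equal; try apply ufun.
Qed.

Lemma L7 : forall q q' (psi : pmap q q'),
        pcomp (Feta F0 q') (pid py)
        = pcomp (Fsq F0 psi psi (org_unit q) (org_unit q') (fun u => u)) (Feta F0 q).
Proof.
  intros. apply pmap_ext; intros []; simpl. f_equal.
  apply functional_extensionality; intros []; reflexivity.
Qed.

Lemma L8 : forall s r q p (c1 : coalg q p) (c2 : coalg r q) (c3 : coalg s r),
        pcomp (Fsq F0 (pid s) (pid p) (org_hcomp (org_hcomp c1 c2) c3)
                   (org_hcomp c1 (org_hcomp c2 c3)) org_assoc)
              (pcomp (Fmu F0 (org_hcomp c1 c2) c3)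
                     (tri_map (Fmu F0 c1 c2) (pid (car (Fh c3)))))
        = pcomp (Fmu F0 c1 (org_hcomp c2 c3))
                (pcomp (tri_map (pid (car (Fh c1))) (Fmu F0 c2 c3))
                       (assoc (car (Fh c1)) (car (Fh c2)) (car (Fh c3)))).
Proof.
  intros. apply pmap_ext; intros [[s1 k1] k2]; simpl.
  reflexivity.
Qed.

Lemma L9 : forall q p (c : coalg q p),
        pcomp (Fsq F0 (pid q) (pid p) (org_hcomp (org_unit p) c) c (fun x => snd x))
              (pcomp (Fmu F0 (org_unit p) c) (tri_map (Feta F0 p) (pid (car (Fh c)))))
        = lunit (car (Fh c)).
Proof.
  intros. apply pmap_ext; intros [[] k]; simpl.
  f_equal. apply functional_extensionality; intros []; reflexivity.
Qed.

Lemma L10 : forall q p (c : coalg q p),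
        pcomp (Fsq F0 (pid q) (pid p) (org_hcomp c (org_unit q)) c (fun x => fst x))
              (pcomp (Fmu F0 c (org_unit q)) (tri_map (pid (car (Fh c))) (Feta F0 q)))
        = runit (car (Fh c)).
Proof.
  intros. apply pmap_ext; intros [s k]; simpl.
  f_equal. apply functional_extensionality; intros []; reflexivity.
Qed.

Definition evf {q p : poly} {S : Type} (z : pos (tri (hom q p) (pconst S))) (I : pos q)
  : {j : pos p & ((dir p j -> dir q I) * (dir p j -> S))%type} :=
  existT (fun j : pos p => ((dir p j -> dir q I) * (dir p j -> S))%type)
       (on_pos (projT1 z) I) (on_dir (projT1 z) I, fun d => projT2 z (existT _ I d)).

Lemma evf_inj {q p : poly} {S : Type} (z1 z2 : pos (tri (hom q p) (pconst S))) :
  (forall I, evf z1 I = evf z2 I) -> z1 = z2.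
Proof.
  intro H.
  assert (E : (fun I => evf z1 I) = (fun I => evf z2 I))
    by (apply functional_extensionality_dep; exact H).
  set (R := fun F : forall I : pos q, {j : pos p & ((dir p j -> dir q I) * (dir p j -> S))%type} =>
    existT (fun chi : pmap q p => {I : pos q & dir p (on_pos chi I)} -> S)
      (PMap q p (fun I => projT1 (F I)) (fun I => fst (projT2 (F I))))
      (fun e => snd (projT2 (F (projT1 e))) (projT2 e))).
  assert (K : forall z, R (fun I => evf z I) = z).
  { intros [[a b] k]. unfold R, evf; simpl. f_equal.
    apply functional_extensionality; intros [I d]; reflexivity. }
  rewrite <- (K z1), <- (K z2), E. reflexivity.
Qed.

Lemma full : forall q p q' p' (psi : pmap q q') (phi : pmap p p') (c : coalg q p) (c' : coalg q' p')
   (gm : pmap (car (Fh c)) (car (Fh c'))), eff_square psi phi (Fh c) (Fh c') gm ->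
   exists f, org_square psi phi c c' f /\ Fsq F0 psi phi c c' f = gm.
Proof.
  intros q p q' p' psi phi c c' gm E.
  assert (Hg : gm = Fsq0 psi phi c c' (on_pos gm)).
  { apply pmap_ext; intro i; simpl. f_equal. apply (@unit_fun_eq unit). }
  exists (on_pos gm). split; [| symmetry; exact Hg].
  rewrite Hg in E. clear Hg. set (f := on_pos gm) in *. clearbody f. clear gm.
  unfold org_square. apply functional_extensionality; intro s.
  apply evf_inj; intro I.
  pose proof (f_equal (fun g : pmap (tri (plin (st c)) q) (tri p' (plin (st c'))) => existT (fun j => dir (tri p' (plin (st c'))) j -> dir (tri (plin (st c)) q) (existT (fun _ : st c => unit -> pos q) s (fun _ => I)))
         (on_pos g (existT (fun _ : st c => unit -> pos q) s (fun _ => I)))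
         (on_dir g (existT (fun _ : st c => unit -> pos q) s (fun _ => I)))) E) as E2.
  cbv beta in E2.
  set (G' := fun (y : {y : pos (tri p' (plin (st c'))) & dir (tri p' (plin (st c'))) y -> dir (tri (plin (st c)) q) (existT (fun _ : st c => unit -> pos q) s (fun _ => I))}) =>
     existT (fun j : pos p' => ((dir p' j -> dir q I) * (dir p' j -> st c'))%type)
       (projT1 (projT1 y))
       (fun d => projT2 (projT2 y (existT (fun _ => unit) d tt)), projT2 (projT1 y))).
  pose proof (f_equal G' E2) as E3.
  unfold G' in E3; simpl in E3.
  exact E3.
Qed.

Lemma tri_map_id (p q : poly) : tri_map (pid p) (pid q) = pid (tri p q).
Proof.
  apply pmap_ext; intros [i k]; simpl. f_equal.
  apply functional_extensionality; intros [d e]; reflexivity.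
Qed.

Lemma pcomp_id_l {p q : poly} (f : pmap p q) : pcomp (pid q) f = f.
Proof. destruct f; reflexivity. Qed.

Lemma ess : forall (p q : poly) (h : handler p q), in_essential_image h <-> is_linear h.
Proof.
  intros p q h. split.
  - intros (q0 & p0 & c & psi & phi & a & Hsq & _ & _ & [b [Hb1 Hb2]]).
    exists (st c), b. exists a. split; assumption.
  - intros (S & b & [b' [Hb1 Hb2]]).
    set (hs := pcomp (tri_map (pid p) b) (pcomp (hstr h) (tri_map b' (pid q)))).
    exists q, p, (Coalg S (untranspose hs)), (pid q), (pid p), b'.
    split; [| split; [exists (pid q); split; reflexivity |
                split; [exists (pid p); split; reflexivity | exists b; split; assumption]]].
    unfold eff_square; simpl. rewrite transpose_untranspose. unfold hs.
    change (pcomp (pcomp (tri_map (pid p) b') (tri_map (pid p) b)) (pcomp (hstr h) (tri_map b' (pid q)))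
       = pcomp (hstr h) (tri_map b' (pid q))).
    change (pcomp (tri_map (pid p) (pcomp b' b)) (pcomp (hstr h) (tri_map b' (pid q)))
       = pcomp (hstr h) (tri_map b' (pid q))).
    rewrite Hb1, tri_map_id, pcomp_id_l. reflexivity.
Qed.

Theorem mainTheorem9 :
  (forall (q p : poly) (S : Type),
     exists inv : pmap (tri (plin S) q) (tri p (plin S)) -> (S -> pos (tri (hom q p) (pconst S))),
       (forall th, inv (transpose th) = th) /\ (forall g, transpose (inv g) = g))
  /\ exists F : pdf_data,
       is_pseudo_double_functor F
       /\ fully_faithful_on_squares F
       /\ (forall (p q : poly) (h : handler p q), in_essential_image h <-> is_linear h).
Proof.
  split.
  - intros q p S. exists untranspose. split.
    + apply untranspose_transpose.
    + apply transpose_untranspose.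
  - exists F0. split; [| split].
    + unfold is_pseudo_double_functor.
      split; [exact L1|]. split; [exact L2|]. split; [exact L3|]. split; [exact L4|].
      split; [exact L5|]. split; [exact L6|]. split; [exact L7|]. split; [exact L8|].
      split; [exact L9|]. exact L10.
    + intros q p q' p' psi phi c c'. split.
      * intros f g _ _ Hfg. exact (f_equal (fun m => on_pos m) Hfg).
      * intro gm. apply full.
    + exact ess.
Qed.
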